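(* Let $A$ and $B$ be tridendriform algebras over a field $\mathbb{K}$. Define three bilinear products on $A\otimes B$ by $$(a\otimes b)\prec(c\otimes d)=(a*c)\otimes(b\prec d),\quad (a\otimes b)\cdot(c\otimes d)=(a*c)\otimes(b\cdot d),\quad (a\otimes b)\succ(c\otimes d)=(a*c)\otimes(b\succ d)$$ for $a,c\in A$, $b,d\in B$. Then $(A\otimes B,\prec,\cdot,\succ)$ is a tridendriform algebra.
   Context: A tridendriform algebra over $\mathbb{K}$ is a vector space $A$ with three bilinear products $\prec,\cdot,\succ$ such that, writing $a*b=a\prec b+a\cdot b+a\succ b$, for all $a,b,c\in A$: $(a\prec b)\prec c=a\prec(b*c)$, $(a\succ b)\prec c=a\succ(b\prec c)$, $(a*b)\succ c=a\succ(b\succ c)$, $(a\succ b)\cdot c=a\succ(b\cdot c)$, $(a\prec b)\cdot c=a\cdot(b\succ c)$, $(a\cdot b)\prec c=a\cdot(b\prec c)$, $(a\cdot b)\cdot c=a\cdot(b\cdot c)$. (These imply that $*$ is associative.) In the claim, $a*c$ denotes this associative product of $A$. *)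

(* Defs.v *)
From HB Require Import structures.
From mathcomp Require Import all_boot all_algebra.
Set Implicit Arguments. Unset Strict Implicit. Unset Printing Implicit Defensive.
Import GRing.Theory.
Local Open Scope ring_scope.

Definition lin_fun (K : fieldType) (U V : lmodType K) (f : U -> V) : Prop :=
  forall (k : K) (x y : U), f (k *: x + y) = k *: f x + f y.

Definition bilin (K : fieldType) (U V W : lmodType K) (f : U -> V -> W) : Prop :=
  (forall a : U, lin_fun (f a)) /\ (forall b : V, lin_fun (fun a => f a b)).

(* The associative product a * b = a < b + a . b + a > b. *)
Definition tstar (K : fieldType) (A : lmodType K) (pr dt su : A -> A -> A)
  (a b : A) : A := pr a b + dt a b + su a b.

Definition tridendriform (K : fieldType) (A : lmodType K)
  (pr dt su : A -> A -> A) : Prop :=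
  let st := tstar pr dt su in
  [/\ bilin pr, bilin dt, bilin su &
  forall a b c : A,
  pr (pr a b) c = pr a (st b c) /\
  pr (su a b) c = su a (pr b c) /\
  su (st a b) c = su a (su b c) /\
  dt (su a b) c = su a (dt b c) /\
  dt (pr a b) c = dt a (su b c) /\
  pr (dt a b) c = dt a (pr b c) /\
  dt (dt a b) c = dt a (dt b c)].

Definition is_tensor_product (K : fieldType) (A B T : lmodType K)
  (t : A -> B -> T) : Prop :=
  bilin t /\
  forall (W : lmodType K) (f : A -> B -> W), bilin f ->
    exists! g : T -> W, lin_fun g /\ forall a b, g (t a b) = f a b.

Definition tensor_products (K : fieldType) (A B T : lmodType K)
  (t : A -> B -> T) (prA dtA suA : A -> A -> A) (prB dtB suB : B -> B -> B)
  (pr dt su : T -> T -> T) : Prop :=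
  [/\ bilin pr, bilin dt, bilin su &
  forall (a c : A) (b d : B),
  [/\ pr (t a b) (t c d) = t (tstar prA dtA suA a c) (prB b d),
      dt (t a b) (t c d) = t (tstar prA dtA suA a c) (dtB b d) &
      su (t a b) (t c d) = t (tstar prA dtA suA a c) (suB b d)]].

(* Main.v *)
Require Import Defs.
From HB Require Import structures.
From mathcomp Require Import all_boot all_algebra.
From mathcomp Require Import boolp functions.
Set Implicit Arguments. Unset Strict Implicit. Unset Printing Implicit Defensive.
Import GRing.Theory.
Local Open Scope ring_scope.

Lemma linD (K : fieldType) (U V : lmodType K) (f : U -> V) :
  lin_fun f -> forall x y, f (x + y) = f x + f y.
Proof. by move=> H x y; rewrite -[x in LHS]scale1r H scale1r. Qed.

Lemma lin0 (K : fieldType) (U V : lmodType K) (f : U -> V) :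
  lin_fun f -> f 0 = 0.
Proof.
move=> H; apply: (@addrI _ (f 0)); by rewrite addr0 -linD // addr0.
Qed.

Lemma linZ (K : fieldType) (U V : lmodType K) (f : U -> V) :
  lin_fun f -> forall k x, f (k *: x) = k *: f x.
Proof. by move=> H k x; rewrite -[_ *: x]addr0 H lin0 // addr0. Qed.

Lemma lin_comp (K : fieldType) (U V W : lmodType K) (f : V -> W) (g : U -> V) :
  lin_fun f -> lin_fun g -> lin_fun (fun x => f (g x)).
Proof. by move=> Hf Hg k x y; rewrite Hg Hf. Qed.

Lemma lin_add (K : fieldType) (U V : lmodType K) (f g : U -> V) :
  lin_fun f -> lin_fun g -> lin_fun (fun x => f x + g x).
Proof.
move=> Hf Hg k x y; rewrite Hf Hg scalerDr.
by rewrite -!addrA; congr (_ + _); rewrite addrCA.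
Qed.

Lemma lin_scal (K : fieldType) (U V : lmodType K) (f : U -> V) (k : K) :
  lin_fun f -> lin_fun (fun x => k *: f x).
Proof. by move=> Hf c x y; rewrite Hf scalerDr !scalerA mulrC. Qed.

Lemma bilin_tstar (K : fieldType) (A : lmodType K) (pr dt su : A -> A -> A) :
  bilin pr -> bilin dt -> bilin su -> bilin (tstar pr dt su).
Proof.
move=> [H1 H1'] [H2 H2'] [H3 H3']; split=> a; rewrite /tstar.
  by apply: lin_add; [apply: lin_add|]; auto.
by apply: lin_add; [apply: lin_add|]; auto.
Qed.

Lemma tp_ext (K : fieldType) (A B T : lmodType K) (t : A -> B -> T) :
  is_tensor_product t -> forall (V : lmodType K) (phi psi : T -> V),
  lin_fun phi -> lin_fun psi -> (forall a b, phi (t a b) = psi (t a b)) ->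
  forall x, phi x = psi x.
Proof.
move=> [[Ht1 Ht2] U] V phi psi Hphi Hpsi E x.
have Bf : bilin (fun a b => phi (t a b)).
  split=> a.
    exact: (lin_comp Hphi (Ht1 a)).
  exact: (@lin_comp _ _ _ _ phi (fun x => t x a) Hphi (Ht2 a)).
have [g [[Hg Hg'] Hu]] := U V _ Bf.
by rewrite -(Hu phi (conj Hphi (fun _ _ => erefl))) (Hu psi (conj Hpsi (fun a b => esym (E a b)))).
Qed.

Lemma construct (K : fieldType) (A B T : lmodType K) (t : A -> B -> T)
  (mA : A -> A -> A) (mB : B -> B -> B) :
  is_tensor_product t -> bilin mA -> bilin mB ->
  exists p : T -> T -> T, bilin p /\
    forall a c b d, p (t a b) (t c d) = t (mA a c) (mB b d).
Proof.
move=> TP [HA1 HA2] [HB1 HB2]; have [[Ht1 Ht2] U] := TP.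
have F : forall c d, bilin (fun a b => t (mA a c) (mB b d)).
  move=> c d; split=> a.
    exact: (@lin_comp _ _ _ _ (t (mA a c)) (fun x => mB x d) (Ht1 _) (HB2 d)).
  exact: (@lin_comp _ _ _ _ (fun x => t x (mB a d)) (fun x => mA x c) (Ht2 _) (HA2 c)).
pose G c d := projT1 (cid (U T _ (F c d))).
have HG c d : lin_fun (G c d) /\ forall a b, G c d (t a b) = t (mA a c) (mB b d).
  by have [[? ?] _] := projT2 (cid (U T _ (F c d))).
have BG : bilin (G : A -> B -> (T -> T)).
  split=> c k d d'; apply/funext => x; rewrite /=.
    change (G c (k *: d + d') x = k *: G c d x + G c d' x).
    apply: (tp_ext TP (phi := G c (k *: d + d'))
      (psi := fun x => k *: G c d x + G c d' x)) => //.
    - by case: (HG c (k *: d + d')).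
    - by apply: lin_add; [apply: lin_scal|]; [case: (HG c d)|case: (HG c d')].
    move=> a b; rewrite !(proj2 (HG _ _)) HB1 Ht1 //.
  change (G (k *: d + d') c x = k *: G d c x + G d' c x).
  apply: (tp_ext TP (phi := G (k *: d + d') c)
      (psi := fun x => k *: G d c x + G d' c x)) => //.
  - by case: (HG (k *: d + d') c).
  - by apply: lin_add; [apply: lin_scal|]; [case: (HG d c)|case: (HG d' c)].
  move=> a b; rewrite !(proj2 (HG _ _)) HA1 Ht2 //.
have [H [[HH HH'] _]] := U _ _ BG.
exists (fun x y => H y x); split; last first.
  by move=> a c b d; rewrite HH' (proj2 (HG _ _)).
split=> x k y y'.
  by rewrite HH.
apply: (tp_ext TP (phi := fun z => H z (k *: y + y'))
   (psi := fun z => k *: H z y + H z y')) => //.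
- by move=> c z z'; rewrite HH.
- move=> c z z'; rewrite !HH /=.
  rewrite !scalerDr !scalerA mulrC -!addrA; congr (_ + _).
  by rewrite addrCA; congr (_ + _); rewrite addrCA.
by move=> c d; rewrite HH'; case: (HG c d) => L _; apply: L.
Qed.
Lemma tri_ext (K : fieldType) (A B T : lmodType K) (t : A -> B -> T)
  (p q p' q' : T -> T -> T) : is_tensor_product t ->
  bilin p -> bilin q -> bilin p' -> bilin q' ->
  (forall a b c d e f, p (q (t a b) (t c d)) (t e f) = p' (t a b) (q' (t c d) (t e f))) ->
  forall x y z, p (q x y) z = p' x (q' y z).
Proof.
move=> TP [p1 p2] [q1 q2] [p1' p2'] [q1' q2'] E.
have S1 a b c d z : p (q (t a b) (t c d)) z = p' (t a b) (q' (t c d) z).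
  apply: (tp_ext TP (phi := fun z => p (q (t a b) (t c d)) z)
    (psi := fun z => p' (t a b) (q' (t c d) z))) => //.
  exact: (lin_comp (p1' _) (q1' _)).
have S2 a b y z : p (q (t a b) y) z = p' (t a b) (q' y z).
  apply: (tp_ext TP (phi := fun y => p (q (t a b) y) z)
    (psi := fun y => p' (t a b) (q' y z))).
  - exact: (@lin_comp _ _ _ _ (fun u => p u z) _ (p2 z) (q1 _)).
  - exact: (@lin_comp _ _ _ _ (p' _) (fun y => q' y z) (p1' _) (q2' z)).
  - by move=> c d; exact: S1.
move=> x y z.
apply: (tp_ext TP (phi := fun x => p (q x y) z)
    (psi := fun x => p' x (q' y z))).
- exact: (@lin_comp _ _ _ _ (fun u => p u z) (fun x => q x y) (p2 z) (q2 y)).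
- exact: p2'.
- by move=> a b; exact: S2.
Qed.

Lemma tassoc (K : fieldType) (A : lmodType K) (pr dt su : A -> A -> A) :
  tridendriform pr dt su -> forall a b c,
  tstar pr dt su (tstar pr dt su a b) c = tstar pr dt su a (tstar pr dt su b c).
Proof.
move=> [[p1 p2] [d1 d2] [s1 s2] E] a b c.
have [E1 [E2 [E3 [E4 [E5 [E6 E7]]]]]] := E a b c.
rewrite {1}/tstar E3.
rewrite {1}/tstar !(linD (p2 c)) !(linD (d2 c)).
rewrite E1 E2 E4 E5 E6 E7 /tstar !(linD (d1 a)) !(linD (s1 a)).
rewrite -!addrA; congr (_ + _); congr (_ + _).
set y1 := su a (pr b c).
by rewrite (addrCA y1) (addrCA y1) addrCA.
Qed.

Theorem mainTheorem1 (K : fieldType) (A B T : lmodType K)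
  (prA dtA suA : A -> A -> A) (prB dtB suB : B -> B -> B)
  (t : A -> B -> T) :
  tridendriform prA dtA suA ->
  tridendriform prB dtB suB ->
  is_tensor_product t ->
  (exists pr dt su : T -> T -> T,
      tensor_products t prA dtA suA prB dtB suB pr dt su) /\
  (forall pr dt su : T -> T -> T,
      tensor_products t prA dtA suA prB dtB suB pr dt su ->
      tridendriform pr dt su).
Proof.
move=> HA HB TP.
have HA' := HA; have HB' := HB.
move: HA' HB' => [HprA HdtA HsuA EA] [HprB HdtB HsuB EB].
have BstA := bilin_tstar HprA HdtA HsuA.
split.
  have [p [Hp Ep]] := construct TP BstA HprB.
  have [q [Hq Eq]] := construct TP BstA HdtB.
  have [r [Hr Er]] := construct TP BstA HsuB.
  by exists p, q, r; split=> // a c b d; split.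
move=> pr dt su [Hpr Hdt Hsu E].
have [[Ht1 Ht2] _] := TP.
have EP a b c d : pr (t a b) (t c d) = t (tstar prA dtA suA a c) (prB b d).
  by case: (E a c b d).
have ED a b c d : dt (t a b) (t c d) = t (tstar prA dtA suA a c) (dtB b d).
  by case: (E a c b d).
have ES a b c d : su (t a b) (t c d) = t (tstar prA dtA suA a c) (suB b d).
  by case: (E a c b d).
have EST a b c d : tstar pr dt su (t a b) (t c d) =
    t (tstar prA dtA suA a c) (tstar prB dtB suB b d).
  by rewrite /tstar EP ED ES -!(linD (Ht1 _)).
have Bst := bilin_tstar Hpr Hdt Hsu.
split=> // x y z.
have AS := tassoc HA.
split; last split; last split; last split; last split; last split.
- apply: (tri_ext (p := pr) (q := pr) (p' := pr) (q' := tstar pr dt su) TP) => // a b c d e f.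
  do 3 rewrite ?EP ?ED ?ES ?EST.
  by have [E1 _] := EB b d f; rewrite AS E1.
- apply: (tri_ext (p := pr) (q := su) (p' := su) (q' := pr) TP) => // a b c d e f.
  do 3 rewrite ?EP ?ED ?ES ?EST.
  by have [_ [E1 _]] := EB b d f; rewrite AS E1.
- apply: (tri_ext (p := su) (q := tstar pr dt su) (p' := su) (q' := su) TP) => // a b c d e f.
  do 3 rewrite ?EP ?ED ?ES ?EST.
  by have [_ [_ [E1 _]]] := EB b d f; rewrite AS E1.
- apply: (tri_ext (p := dt) (q := su) (p' := su) (q' := dt) TP) => // a b c d e f.
  do 3 rewrite ?EP ?ED ?ES ?EST.
  by have [_ [_ [_ [E1 _]]]] := EB b d f; rewrite AS E1.
- apply: (tri_ext (p := dt) (q := pr) (p' := dt) (q' := su) TP) => // a b c d e f.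
  do 3 rewrite ?EP ?ED ?ES ?EST.
  by have [_ [_ [_ [_ [E1 _]]]]] := EB b d f; rewrite AS E1.
- apply: (tri_ext (p := pr) (q := dt) (p' := dt) (q' := pr) TP) => // a b c d e f.
  do 3 rewrite ?EP ?ED ?ES ?EST.
  by have [_ [_ [_ [_ [_ [E1 _]]]]]] := EB b d f; rewrite AS E1.
- apply: (tri_ext (p := dt) (q := dt) (p' := dt) (q' := dt) TP) => // a b c d e f.
  do 3 rewrite ?EP ?ED ?ES ?EST.
  by have [_ [_ [_ [_ [_ [_ E1]]]]]] := EB b d f; rewrite AS E1.
Qed.
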